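(* Let $\mathcal{A}=\mathcal{A}_1\cup\mathcal{A}_2$ be an arrangement of lines in $\mathbb{P}^3$, with $\mathcal{A}_1,\mathcal{A}_2$ disjoint, $|\mathcal{A}_1|=a$, $|\mathcal{A}_2|=b$, such that every line of $\mathcal{A}_1$ meets every line of $\mathcal{A}_2$ and any two distinct lines in the same $\mathcal{A}_i$ are disjoint (so $\Gamma(\mathcal{A})\cong K_{a,b}$), where $a,b$ are positive integers with $3\le a\le b$ or $a\le b\le 3$. Then there is a smooth quadric surface $Q\subset\mathbb{P}^3$ containing all lines of $\mathcal{A}$; specifically, for each $i=1,2$, the lines of $\mathcal{A}_i$ all lie in one of the two rulings of $Q$.
   Context: A line arrangement is a finite collection of distinct lines in $\mathbb{P}^3$, each defined over the (arbitrary) ground field. A smooth quadric surface $Q\cong\mathbb{P}^1\times\mathbb{P}^1$ has two rulings, i.e. two families of lines on it. *)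

(* Defs.v *)
From HB Require Import structures.
From mathcomp Require Import all_boot all_order all_algebra.
Set Implicit Arguments. Unset Strict Implicit. Unset Printing Implicit Defensive.
Import GRing.Theory.
Local Open Scope ring_scope.

(* Projective 3-space P^3 over a field F: points are nonzero row vectors of
   F^4 up to scaling; a line is a 2-dimensional subspace of F^4. *)

Section P3.
Variable F : fieldType.

Definition vec4 (x0 x1 x2 x3 : F) : 'rV[F]_4 :=
  \row_(j < 4) nth 0 [:: x0; x1; x2; x3] j.

Definition coord4 (x : 'rV[F]_4) (i : nat) : F := x ord0 (inord i).

Definition is_line (L : {vspace 'rV[F]_4}) : bool := \dim L == 2.

Definition lines_meet (L M : {vspace 'rV[F]_4}) : bool := (L :&: M)%VS != 0%VS.
Definition lines_disjoint (L M : {vspace 'rV[F]_4}) : bool := (L :&: M)%VS == 0%VS.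

(* Standard split smooth quadric Q0 = V(x0 x3 - x1 x2) = Segre image of P^1 x P^1,
   [s:t],[u:v] |-> [su : sv : tu : tv]. *)
Definition qform0 (x : 'rV[F]_4) : F :=
  coord4 x 0 * coord4 x 3 - coord4 x 1 * coord4 x 2.

(* A smooth quadric Q ~= P^1 x P^1 is given by a projective coordinate change
   g (invertible 4x4 matrix): Q_g = { [x] | qform0 (x *m g) = 0 }. *)
Definition on_quadric (g : 'M[F]_4) (x : 'rV[F]_4) : Prop := qform0 (x *m g) = 0.

(* First ruling of Q_g: the lines {[s:t]} x P^1, i.e. spanned in the
   standard coordinates by (s,0,t,0),(0,s,0,t). *)
Definition ruling1 (g : 'M[F]_4) (L : {vspace 'rV[F]_4}) : Prop :=
  exists s t : F, (s, t) != (0, 0) /\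
    L = <<[:: vec4 s 0 t 0 *m invmx g; vec4 0 s 0 t *m invmx g]>>%VS.

(* Second ruling of Q_g: the lines P^1 x {[u:v]}, spanned in the
   standard coordinates by (u,v,0,0),(0,0,u,v). *)
Definition ruling2 (g : 'M[F]_4) (L : {vspace 'rV[F]_4}) : Prop :=
  exists u v : F, (u, v) != (0, 0) /\
    L = <<[:: vec4 u v 0 0 *m invmx g; vec4 0 0 u v *m invmx g]>>%VS.

End P3.

(* Main.v *)
Require Import Defs.
From HB Require Import structures.
From mathcomp Require Import all_boot all_order all_algebra ring.
Import GRing.Theory.
Local Open Scope ring_scope.
Set Warnings "-notation-overridden -ambiguous-paths".
Set Implicit Arguments. Unset Strict Implicit.
Definition indep2 (F : fieldType) (p q : 'rV[F]_4) :=
  forall x y : F, x *: p + y *: q = 0 -> x = 0 /\ y = 0.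

Lemma mem_span2 (F : fieldType) (p q v : 'rV[F]_4) :
  (v \in <<[:: p; q]>>%VS) <-> exists x y, v = x *: p + y *: q.
Proof.
rewrite span_cons span_seq1; split.
- by move/memv_addP => [u /vlineP [x ->] [w /vlineP [y ->] ->]]; exists x, y.
- move=> [x [y ->]]; apply: memv_add; apply/vlineP; eauto.
Qed.

Lemma dim_span2 (F : fieldType) (p q : 'rV[F]_4) :
  indep2 p q -> \dim <<[:: p; q]>> = 2%N.
Proof.
move=> hi.
have hq : q != 0.
  apply/eqP=> q0; have := hi 0 1; rewrite q0 scale0r scaler0 addr0.
  by case=> // _ /eqP; rewrite oner_eq0.
have hp : p \notin <<[:: q]>>%VS.
  rewrite span_seq1; apply/negP=> /vlineP [k pk].
  have := hi 1 (- k); rewrite pk scale1r scaleNr subrr.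
  by case=> // /eqP; rewrite oner_eq0.
have : free [:: p; q] by rewrite free_cons hp /= free_cons span_nil memv0 hq /= nil_free.
by move/eqP.
Qed.

Lemma span2_sub (F : fieldType) (p q : 'rV[F]_4) (L : {vspace 'rV[F]_4}) :
  p \in L -> q \in L -> (<<[:: p; q]>> <= L)%VS.
Proof. by move=> hp hq; apply/span_subvP => v; rewrite !inE => /orP [] /eqP ->. Qed.

Lemma line_eq (F : fieldType) (L : {vspace 'rV[F]_4}) (p q : 'rV[F]_4) :
  \dim L = 2%N -> p \in L -> q \in L -> indep2 p q -> L = <<[:: p; q]>>%VS.
Proof.
move=> hL hp hq hi; apply/eqP; rewrite eq_sym eqEdim span2_sub //=.
by rewrite hL dim_span2.
Qed.

Lemma indep2_dim (F : fieldType) (p q : 'rV[F]_4) :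
  \dim <<[:: p; q]>> = 2%N -> indep2 p q.
Proof.
move=> hd x y hxy.
have key : forall (a b : 'rV[F]_4) (c d : F), c != 0 -> c *: a + d *: b = 0 ->
    (\dim <<[:: a; b]>> <= 1)%N.
  move=> a b c d hc e.
  have ha : a = (- (d / c)) *: b.
    apply: (scalerI hc); rewrite scalerA mulrN mulrC divfK // scaleNr.
    by apply/eqP; rewrite -subr_eq0 opprK e.
  apply: (leq_trans _ (dim_span [:: b])); apply: dimvS.
  apply: span2_sub; last by apply: memv_span; rewrite inE.
  by rewrite ha memvZ // memv_span // inE.
have [hx|hx] := eqVneq x 0.
- split=> //; move: hxy; rewrite hx scale0r add0r => hy.
  have [//|yn] := eqVneq y 0.
  have := key q p y 0 yn; rewrite scale0r addr0 hy => /(_ erefl).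
  have -> : <<[:: q; p]>>%VS = <<[:: p; q]>>%VS.
    by apply: eq_span => v; rewrite !inE orbC.
  by rewrite hd.
- by have := key p q x y hx hxy; rewrite hd.
Qed.

Lemma line_basis (F : fieldType) (L : {vspace 'rV[F]_4}) :
  \dim L = 2%N -> exists p q, indep2 p q /\ L = <<[:: p; q]>>%VS.
Proof.
move=> hL; have := vbasisP L; rewrite /basis_of => /andP [/eqP hs hf].
have sz : size (vbasis L) = 2%N by rewrite size_tuple hL.
move: hs hf sz; case: (tval (vbasis L)) => [|p [|q [|]]] //= hs hf _.
exists p, q; split; last by rewrite hs.
by apply: indep2_dim; move/eqP: hf.
Qed.

Definition mx4 (F : fieldType) (b0 b1 b2 b3 : 'rV[F]_4) : 'M[F]_4 :=
  \matrix_(i < 4) nth 0 [:: b0; b1; b2; b3] i.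

Definition cmb (F : fieldType) (b0 b1 b2 b3 : 'rV[F]_4) (x0 x1 x2 x3 : F) :=
  vec4 x0 x1 x2 x3 *m mx4 b0 b1 b2 b3.

Lemma cmbE (F : fieldType) (b0 b1 b2 b3 : 'rV[F]_4) x0 x1 x2 x3 :
  cmb b0 b1 b2 b3 x0 x1 x2 x3 = x0 *: b0 + x1 *: b1 + x2 *: b2 + x3 *: b3.
Proof.
rewrite /cmb mulmx_sum_row !big_ord_recl big_ord0 !rowK !mxE /= addr0.
by rewrite !addrA.
Qed.

Lemma vec4_lin (F : fieldType) (x y a0 a1 a2 a3 c0 c1 c2 c3 : F) :
  x *: vec4 a0 a1 a2 a3 + y *: vec4 c0 c1 c2 c3 =
  vec4 (x * a0 + y * c0) (x * a1 + y * c1) (x * a2 + y * c2) (x * a3 + y * c3).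
Proof.
by apply/rowP => j; rewrite !mxE; case: j => [[|[|[|[|j]]]] hj] //=; rewrite !mxE.
Qed.

Lemma cmb_lin (F : fieldType) (b0 b1 b2 b3 : 'rV[F]_4) (x y a0 a1 a2 a3 c0 c1 c2 c3 : F) :
  x *: cmb b0 b1 b2 b3 a0 a1 a2 a3 + y *: cmb b0 b1 b2 b3 c0 c1 c2 c3 =
  cmb b0 b1 b2 b3 (x * a0 + y * c0) (x * a1 + y * c1) (x * a2 + y * c2) (x * a3 + y * c3).
Proof. by rewrite /cmb !scalemxAl -mulmxDl vec4_lin. Qed.

Definition indep4 (F : fieldType) (b0 b1 b2 b3 : 'rV[F]_4) :=
  forall x0 x1 x2 x3 : F, cmb b0 b1 b2 b3 x0 x1 x2 x3 = 0 ->
    [/\ x0 = 0, x1 = 0, x2 = 0 & x3 = 0].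

Lemma cmb_inj (F : fieldType) (b0 b1 b2 b3 : 'rV[F]_4) x0 x1 x2 x3 y0 y1 y2 y3 :
  indep4 b0 b1 b2 b3 ->
  cmb b0 b1 b2 b3 x0 x1 x2 x3 = cmb b0 b1 b2 b3 y0 y1 y2 y3 ->
  [/\ x0 = y0, x1 = y1, x2 = y2 & x3 = y3].
Proof.
move=> hi e.
have := hi (x0 - y0) (x1 - y1) (x2 - y2) (x3 - y3).
have -> : cmb b0 b1 b2 b3 (x0 - y0) (x1 - y1) (x2 - y2) (x3 - y3) =
   1 *: cmb b0 b1 b2 b3 x0 x1 x2 x3 + (-1) *: cmb b0 b1 b2 b3 y0 y1 y2 y3.
  by rewrite cmb_lin; congr cmb; ring.
rewrite e scale1r scaleN1r subrr => /(_ erefl) [] /eqP h0 /eqP h1 /eqP h2 /eqP h3.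
by split; apply/eqP; rewrite -subr_eq0.
Qed.

Lemma vec4_eta (F : fieldType) (x : 'rV[F]_4) :
  x = vec4 (x 0 0) (x 0 1) (x 0 2) (x 0 3).
Proof.
apply/rowP => j; rewrite !mxE; case: j => [[|[|[|[|j]]]] hj] //=;
  by congr (x _ _); apply: val_inj.
Qed.

Lemma vec4_0 (F : fieldType) : vec4 0 0 0 0 = 0 :> 'rV[F]_4.
Proof. by apply/rowP => j; rewrite !mxE; case: j => [[|[|[|[|j]]]] hj]. Qed.

Lemma indep4_unit (F : fieldType) (b0 b1 b2 b3 : 'rV[F]_4) :
  indep4 b0 b1 b2 b3 -> mx4 b0 b1 b2 b3 \in unitmx.
Proof.
move=> hi; rewrite -row_free_unit -kermx_eq0; apply/eqP/row_matrixP => i.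
rewrite row0; set x := row i _.
have hx : x *m mx4 b0 b1 b2 b3 = 0 by rewrite /x -row_mul mulmx_ker row0.
rewrite (vec4_eta x) in hx *.
by have [-> -> -> ->] := hi _ _ _ _ hx; rewrite vec4_0.
Qed.

Lemma cmb_swap (F : fieldType) (b0 b1 b2 b3 : 'rV[F]_4) x0 x1 x2 x3 :
  cmb b0 b2 b1 b3 x0 x1 x2 x3 = cmb b0 b1 b2 b3 x0 x2 x1 x3.
Proof. by rewrite !cmbE; congr (_ + _); rewrite addrAC. Qed.

Lemma cap0_mem (F : fieldType) (U V : {vspace 'rV[F]_4}) z :
  (U :&: V)%VS = 0%VS -> z \in U -> z \in V -> z = 0.
Proof. by move=> h hu hv; apply/eqP; rewrite -memv0 -h memv_cap hu hv. Qed.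

Lemma indep2_skew (F : fieldType) (U V : {vspace 'rV[F]_4}) p q :
  (U :&: V)%VS = 0%VS -> p \in U -> q \in V -> p != 0 -> q != 0 -> indep2 p q.
Proof.
move=> h hp hq p0 q0 x y e.
have e' : x *: p = - (y *: q) by apply/eqP; rewrite -subr_eq0 opprK e.
have hxp : x *: p = 0.
  by apply: (cap0_mem h); [rewrite memvZ | rewrite e' memvN memvZ].
have hyq : y *: q = 0 by move: e; rewrite hxp add0r.
by split; apply/eqP; [move/eqP: hxp | move/eqP: hyq]; rewrite scaler_eq0 ?(negbTE p0) ?(negbTE q0) orbF.
Qed.

Lemma prop2 (F : fieldType) (a b c d : F) :
  (a, b) != (0, 0) -> a * d - c * b = 0 -> exists k, c = k * a /\ d = k * b.
Proof.
rewrite xpair_eqE negb_and => hab e.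
have [a0|a0] := eqVneq a 0.
- rewrite a0 eqxx /= in hab. exists (d / b); split; last by rewrite divfK.
  move: e; rewrite a0 mul0r sub0r => /eqP; rewrite oppr_eq0 mulf_eq0 (negbTE hab) orbF => /eqP ->.
  by rewrite mulr0.
- exists (c / a); split; first by rewrite divfK.
  have ad : a * d = c * b by apply/eqP; rewrite -subr_eq0 e.
  by rewrite -[d](mulKf a0) ad; ring.
Qed.

Lemma pick_cap (F : fieldType) (M L : {vspace 'rV[F]_4}) :
  (M :&: L)%VS != 0%VS -> exists z, [/\ z != 0, z \in M & z \in L].
Proof.
move=> h; exists (vpick (M :&: L)); rewrite vpick0 h; have := memv_pick (M :&: L).
by rewrite memv_cap => /andP [].
Qed.

Lemma line_eq2 (F : fieldType) (L : {vspace 'rV[F]_4}) (p q : 'rV[F]_4) :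
  \dim L = 2%N -> (L <= <<[:: p; q]>>)%VS -> indep2 p q -> L = <<[:: p; q]>>%VS.
Proof. by move=> hL hs hi; apply/eqP; rewrite eqEdim hs hL dim_span2. Qed.

Definition R1 (F : fieldType) (b0 b1 b2 b3 : 'rV[F]_4) (L : {vspace 'rV[F]_4}) :=
  exists s t : F, (s, t) != (0, 0) /\
    L = <<[:: cmb b0 b1 b2 b3 s 0 t 0; cmb b0 b1 b2 b3 0 s 0 t]>>%VS.
Definition R2 (F : fieldType) (b0 b1 b2 b3 : 'rV[F]_4) (L : {vspace 'rV[F]_4}) :=
  exists u v : F, (u, v) != (0, 0) /\
    L = <<[:: cmb b0 b1 b2 b3 u v 0 0; cmb b0 b1 b2 b3 0 0 u v]>>%VS.

Lemma R2_swap (F : fieldType) (b0 b1 b2 b3 : 'rV[F]_4) L :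
  R2 b0 b1 b2 b3 L <-> R1 b0 b2 b1 b3 L.
Proof. by split=> -[u [v [h ->]]]; exists u, v; rewrite !(cmb_swap b0 b1 b2 b3). Qed.
Lemma R1_swap (F : fieldType) (b0 b1 b2 b3 : 'rV[F]_4) L :
  R1 b0 b1 b2 b3 L <-> R2 b0 b2 b1 b3 L.
Proof. by split=> -[u [v [h ->]]]; exists u, v; rewrite !(cmb_swap b0 b1 b2 b3). Qed.

Lemma indep4_swap (F : fieldType) (b0 b1 b2 b3 : 'rV[F]_4) :
  indep4 b0 b1 b2 b3 -> indep4 b0 b2 b1 b3.
Proof.
move=> h x0 x1 x2 x3; rewrite cmb_swap => /h [] *; by split.
Qed.

Lemma R1_pt (F : fieldType) (b0 b1 b2 b3 : 'rV[F]_4) s t z :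
  z \in <<[:: cmb b0 b1 b2 b3 s 0 t 0; cmb b0 b1 b2 b3 0 s 0 t]>>%VS ->
  exists al be, z = cmb b0 b1 b2 b3 (al * s) (be * s) (al * t) (be * t).
Proof.
move/mem_span2 => [al [be ->]]; exists al, be; rewrite cmb_lin; congr cmb; ring.
Qed.

Lemma cmb0 (F : fieldType) (b0 b1 b2 b3 : 'rV[F]_4) : cmb b0 b1 b2 b3 0 0 0 0 = 0.
Proof. by rewrite /cmb vec4_0 mul0mx. Qed.

Lemma mul_pair0 (F : fieldType) (x u v : F) :
  (u, v) != (0, 0) -> x * u = 0 -> x * v = 0 -> x = 0.
Proof.
rewrite xpair_eqE negb_and => /orP [] h /eqP e1 /eqP e2; apply/eqP.
- by move: e1; rewrite mulf_eq0 (negbTE h) orbF.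
- by move: e2; rewrite mulf_eq0 (negbTE h) orbF.
Qed.

Lemma indep2_R2 (F : fieldType) (b0 b1 b2 b3 : 'rV[F]_4) u v :
  indep4 b0 b1 b2 b3 -> (u, v) != (0, 0) ->
  indep2 (cmb b0 b1 b2 b3 u v 0 0) (cmb b0 b1 b2 b3 0 0 u v).
Proof.
move=> hi huv x y; rewrite cmb_lin -(cmb0 b0 b1 b2 b3) => /(cmb_inj hi).
rewrite !mulr0 !addr0 !add0r => -[h0 h1 h2 h3].
by split; apply: (mul_pair0 huv).
Qed.

Lemma indep2_R1 (F : fieldType) (b0 b1 b2 b3 : 'rV[F]_4) u v :
  indep4 b0 b1 b2 b3 -> (u, v) != (0, 0) ->
  indep2 (cmb b0 b1 b2 b3 u 0 v 0) (cmb b0 b1 b2 b3 0 u 0 v).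
Proof.
move=> hi huv x y; rewrite cmb_lin -(cmb0 b0 b1 b2 b3) => /(cmb_inj hi).
rewrite !mulr0 !addr0 !add0r => -[h0 h1 h2 h3].
by split; apply: (mul_pair0 huv).
Qed.

Lemma K (F : fieldType) (b0 b1 b2 b3 : 'rV[F]_4) (L1 L2 L3 M : {vspace 'rV[F]_4}) :
  indep4 b0 b1 b2 b3 ->
  R1 b0 b1 b2 b3 L1 -> R1 b0 b1 b2 b3 L2 -> R1 b0 b1 b2 b3 L3 ->
  (L1 :&: L2)%VS = 0%VS -> (L1 :&: L3)%VS = 0%VS -> (L2 :&: L3)%VS = 0%VS ->
  \dim M = 2%N -> (M :&: L1)%VS != 0%VS -> (M :&: L2)%VS != 0%VS -> (M :&: L3)%VS != 0%VS ->
  R2 b0 b1 b2 b3 M.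
Proof.
move=> hi [s1 [t1 [st1 eL1]]] [s2 [t2 [st2 eL2]]] [s3 [t3 [st3 eL3]]] h12 h13 h23 hM m1 m2 m3.
have [z1 [z1n z1M z1L]] := pick_cap m1.
have [z2 [z2n z2M z2L]] := pick_cap m2.
have [z3 [z3n z3M z3L]] := pick_cap m3.
have := z1L; rewrite eL1 => /R1_pt [a1 [c1 ez1]].
have := z2L; rewrite eL2 => /R1_pt [a2 [c2 ez2]].
have := z3L; rewrite eL3 => /R1_pt [a3 [c3 ez3c]].
have i12 : indep2 z1 z2 := indep2_skew h12 z1L z2L z1n z2n.
have eM : M = <<[:: z1; z2]>>%VS := line_eq hM z1M z2M i12.
have /mem_span2 [la [mu ez3]] : z3 \in <<[:: z1; z2]>>%VS by rewrite -eM.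
have la0 : la != 0.
  apply/eqP => la0; move: ez3; rewrite la0 scale0r add0r => ez3.
  by move/negP: z3n; apply; apply/eqP; apply: (cap0_mem h23) => //; rewrite ez3 memvZ.
have mu0 : mu != 0.
  apply/eqP => mu0; move: ez3; rewrite mu0 scale0r addr0 => ez3.
  by move/negP: z3n; apply; apply/eqP; apply: (cap0_mem h13) => //; rewrite ez3 memvZ.
have E := etrans (esym ez3c) ez3.
rewrite ez1 ez2 cmb_lin in E.
have [e0 e1 e2 e3] := cmb_inj hi E.
have h : (a3 * s3) * (c3 * t3) - (c3 * s3) * (a3 * t3) = 0 by ring.
rewrite e0 e1 e2 e3 in h.
have key : la * mu * ((s1 * t2 - s2 * t1) * (a1 * c2 - a2 * c1)) = 0 by rewrite -h; ring.
move/eqP: key; rewrite !mulf_eq0 (negbTE la0) (negbTE mu0) /= => /orP [] /eqP hs.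
- have [k [hk1 hk2]] := prop2 st1 hs.
  exfalso; move/negP: z2n; apply; apply/eqP; apply: (cap0_mem h12) => //.
  rewrite eL1; apply/mem_span2; exists (a2 * k), (c2 * k).
  by rewrite ez2 hk1 hk2 cmb_lin; congr cmb; ring.
- have ac1 : (a1, c1) != (0, 0).
    apply/negP; rewrite xpair_eqE => /andP [/eqP ha1 /eqP hc1].
    by move/negP: z1n; apply; rewrite ez1 ha1 hc1 !mul0r cmb0.
  have [k [hk1 hk2]] := prop2 ac1 hs.
  exists a1, c1; split => //; apply: (line_eq2 hM _ (indep2_R2 hi ac1)).
  rewrite eM; apply: span2_sub; apply/mem_span2.
  + by exists s1, t1; rewrite ez1 cmb_lin; congr cmb; ring.
  + by exists (k * s2), (k * t2); rewrite ez2 hk1 hk2 cmb_lin; congr cmb; ring.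
Qed.

Lemma indep4_of (F : fieldType) (U V : {vspace 'rV[F]_4}) b0 b1 b2 b3 :
  (U :&: V)%VS = 0%VS -> b0 \in U -> b1 \in U -> b2 \in V -> b3 \in V ->
  indep2 b0 b1 -> indep2 b2 b3 -> indep4 b0 b1 b2 b3.
Proof.
move=> h h0 h1 h2 h3 i01 i23 x0 x1 x2 x3; rewrite cmbE -addrA => e.
have e' : x0 *: b0 + x1 *: b1 = - (x2 *: b2 + x3 *: b3).
  by apply/eqP; rewrite -subr_eq0 opprK e.
have hu : x0 *: b0 + x1 *: b1 = 0.
  apply: (cap0_mem h); first by rewrite memvD ?memvZ.
  by rewrite e' memvN memvD ?memvZ.
have hv : x2 *: b2 + x3 *: b3 = 0 by move: e; rewrite hu add0r.
by have [-> ->] := i01 _ _ hu; have [-> ->] := i23 _ _ hv.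
Qed.

Lemma cmb1000 (F : fieldType) (b0 b1 b2 b3 : 'rV[F]_4) :
  [/\ cmb b0 b1 b2 b3 1 0 0 0 = b0, cmb b0 b1 b2 b3 0 1 0 0 = b1,
      cmb b0 b1 b2 b3 0 0 1 0 = b2 & cmb b0 b1 b2 b3 0 0 0 1 = b3].
Proof. by split; rewrite cmbE !scale0r !scale1r ?addr0 ?add0r. Qed.

Lemma cmb1010 (F : fieldType) (b0 b1 b2 b3 : 'rV[F]_4) :
  cmb b0 b1 b2 b3 1 0 1 0 = b0 + b2 /\ cmb b0 b1 b2 b3 0 1 0 1 = b1 + b3.
Proof. by split; rewrite cmbE !scale0r !scale1r ?addr0 ?add0r. Qed.

Lemma nz10 (F : fieldType) : ((1 : F), (0 : F)) != (0, 0).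
Proof. by rewrite xpair_eqE oner_eq0. Qed.
Lemma nz01 (F : fieldType) : ((0 : F), (1 : F)) != (0, 0).
Proof. by rewrite xpair_eqE oner_eq0 andbF. Qed.
Lemma nz11 (F : fieldType) : ((1 : F), (1 : F)) != (0, 0).
Proof. by rewrite xpair_eqE oner_eq0. Qed.

Lemma span2l (F : fieldType) (p q : 'rV[F]_4) : p \in <<[:: p; q]>>%VS.
Proof. by apply: memv_span; rewrite !inE eqxx. Qed.
Lemma span2r (F : fieldType) (p q : 'rV[F]_4) : q \in <<[:: p; q]>>%VS.
Proof. by apply: memv_span; rewrite !inE eqxx orbT. Qed.

Lemma three_skew (F : fieldType) (L1 L2 L3 : {vspace 'rV[F]_4}) :
  \dim L1 = 2%N -> \dim L2 = 2%N -> \dim L3 = 2%N ->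
  (L1 :&: L2)%VS = 0%VS -> (L1 :&: L3)%VS = 0%VS -> (L2 :&: L3)%VS = 0%VS ->
  exists b0 b1 b2 b3, [/\ indep4 b0 b1 b2 b3, R1 b0 b1 b2 b3 L1,
     R1 b0 b1 b2 b3 L2 & R1 b0 b1 b2 b3 L3].
Proof.
move=> d1 d2 d3 h12 h13 h23.
have [w0 [w1 [iw eL3]]] := line_basis d3.
have full : (L1 + L2)%VS = fullv.
  by apply/eqP; rewrite eqEdim subvf dimvf /= (dimv_disjoint_sum h12) d1 d2.
have : w0 \in (L1 + L2)%VS by rewrite full memvf.
move=> /memv_addP [p0 hp0 [q0 hq0 ew0]].
have : w1 \in (L1 + L2)%VS by rewrite full memvf.
move=> /memv_addP [p1 hp1 [q1 hq1 ew1]].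
have hw0 : w0 \in L3 by rewrite eL3 span2l.
have hw1 : w1 \in L3 by rewrite eL3 span2r.
have ip : indep2 p0 p1.
  move=> x y hxy; apply: iw.
  have e : x *: w0 + y *: w1 = x *: q0 + y *: q1.
    by rewrite ew0 ew1 !scalerDr addrACA hxy add0r.
  rewrite e; apply: (cap0_mem h23); first by rewrite memvD ?memvZ.
  by rewrite -e memvD ?memvZ.
have iq : indep2 q0 q1.
  move=> x y hxy; apply: iw.
  have e : x *: w0 + y *: w1 = x *: p0 + y *: p1.
    by rewrite ew0 ew1 !scalerDr addrACA hxy addr0.
  rewrite e; apply: (cap0_mem h13); first by rewrite memvD ?memvZ.
  by rewrite -e memvD ?memvZ.
have i4 := indep4_of h12 hp0 hp1 hq0 hq1 ip iq.
have [c0 c1 c2 c3] := cmb1000 p0 p1 q0 q1.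
have [c4 c5] := cmb1010 p0 p1 q0 q1.
exists p0, p1, q0, q1; split => //.
- exists 1, 0; split; first exact: nz10.
  by rewrite c0 c1; apply: line_eq.
- exists 0, 1; split; first exact: nz01.
  by rewrite c2 c3; apply: line_eq.
- exists 1, 1; split; first exact: nz11.
  by rewrite c4 c5 -ew0 -ew1.
Qed.

Lemma indep2_line (F : fieldType) (p m : 'rV[F]_4) :
  p != 0 -> m \notin <[p]>%VS -> indep2 p m.
Proof.
move=> p0 hm x y e.
have [y0|y0] := eqVneq y 0.
  move: e; rewrite y0 scale0r addr0 => /eqP; rewrite scaler_eq0 (negbTE p0) orbF.
  by move/eqP.
exfalso; move/negP: hm; apply; apply/vlineP; exists (- (x / y)).
apply: (scalerI y0); rewrite scalerA mulrN mulrC divfK // scaleNr.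
by apply/eqP; rewrite -subr_eq0 opprK addrC e.
Qed.

Lemma extend_line (F : fieldType) (L : {vspace 'rV[F]_4}) p :
  \dim L = 2%N -> p \in L -> p != 0 -> exists m, m \in L /\ indep2 p m.
Proof.
move=> hL hp p0; have [w0 [w1 [iw eL]]] := line_basis hL.
have [h0|h0] := boolP (w0 \in <[p]>%VS); last first.
  by exists w0; split; [rewrite eL span2l | exact: indep2_line].
have [h1|h1] := boolP (w1 \in <[p]>%VS); last first.
  by exists w1; split; [rewrite eL span2r | exact: indep2_line].
exfalso.
have : (L <= <[p]>)%VS by rewrite eL; apply: span2_sub.
by move/dimvS; rewrite hL dim_vline p0.
Qed.

Lemma notin_exists (F : fieldType) (U : {vspace 'rV[F]_4}) :
  (\dim U < 4)%N -> exists v, v \notin U.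
Proof.
move=> hU.
have [/hasP [v _ hv]|/hasPn h] := boolP (has (fun v => v \notin U) (vbasis (fullv : {vspace 'rV[F]_4}))).
  by exists v.
have : (fullv <= U)%VS.
  rewrite -(span_basis (vbasisP fullv)); apply/span_subvP => v /h.
  by rewrite negbK.
by move/dimvS; rewrite dimvf /= leqNgt hU.
Qed.

Lemma S22 (F : fieldType) (L1 L2 M1 M2 : {vspace 'rV[F]_4}) :
  \dim L1 = 2%N -> \dim L2 = 2%N -> \dim M1 = 2%N -> \dim M2 = 2%N ->
  (L1 :&: L2)%VS = 0%VS -> (M1 :&: M2)%VS = 0%VS ->
  (L1 :&: M1)%VS != 0%VS -> (L1 :&: M2)%VS != 0%VS ->
  (L2 :&: M1)%VS != 0%VS -> (L2 :&: M2)%VS != 0%VS ->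
  exists b0 b1 b2 b3, [/\ indep4 b0 b1 b2 b3, R1 b0 b1 b2 b3 L1,
     R1 b0 b1 b2 b3 L2, R2 b0 b1 b2 b3 M1 & R2 b0 b1 b2 b3 M2].
Proof.
move=> d1 d2 d3 d4 hL hM m11 m12 m21 m22.
have [p [pn pL pM]] := pick_cap m11.
have [q [qn qL qM]] := pick_cap m12.
have [r [rn rL rM]] := pick_cap m21.
have [s [sn sL sM]] := pick_cap m22.
have i1 := indep2_skew hM pM qM pn qn.
have i2 := indep2_skew hM rM sM rn sn.
have i3 := indep2_skew hL pL rL pn rn.
have i4 := indep2_skew hL qL sL qn sn.
have hi := indep4_of hL pL qL rL sL i1 i2.
have [c0 c1 c2 c3] := cmb1000 p q r s.
exists p, q, r, s; split => //.
- by exists 1, 0; split; [exact: nz10 | rewrite c0 c1; apply: line_eq].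
- by exists 0, 1; split; [exact: nz01 | rewrite c2 c3; apply: line_eq].
- by exists 1, 0; split; [exact: nz10 | rewrite c0 c2; apply: line_eq].
- by exists 0, 1; split; [exact: nz01 | rewrite c1 c3; apply: line_eq].
Qed.

Lemma S12 (F : fieldType) (L M1 M2 : {vspace 'rV[F]_4}) :
  \dim L = 2%N -> \dim M1 = 2%N -> \dim M2 = 2%N ->
  (M1 :&: M2)%VS = 0%VS ->
  (L :&: M1)%VS != 0%VS -> (L :&: M2)%VS != 0%VS ->
  exists b0 b1 b2 b3, [/\ indep4 b0 b1 b2 b3, R1 b0 b1 b2 b3 L,
     R2 b0 b1 b2 b3 M1 & R2 b0 b1 b2 b3 M2].
Proof.
move=> d1 d3 d4 hM m1 m2.
have [p [pn pL pM]] := pick_cap m1.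
have [q [qn qL qM]] := pick_cap m2.
have [m [mM im]] := extend_line d3 pM pn.
have [n [nM inn]] := extend_line d4 qM qn.
have i1 := indep2_skew hM pM qM pn qn.
have hi := indep4_swap (indep4_of hM pM mM qM nM im inn).
have [c0 c1 c2 c3] := cmb1000 p q m n.
exists p, q, m, n; split => //.
- by exists 1, 0; split; [exact: nz10 | rewrite c0 c1; apply: line_eq].
- by exists 1, 0; split; [exact: nz10 | rewrite c0 c2; apply: line_eq].
- by exists 0, 1; split; [exact: nz01 | rewrite c1 c3; apply: line_eq].
Qed.

Lemma S11 (F : fieldType) (L M : {vspace 'rV[F]_4}) :
  \dim L = 2%N -> \dim M = 2%N -> L != M -> (L :&: M)%VS != 0%VS ->
  exists b0 b1 b2 b3, [/\ indep4 b0 b1 b2 b3, R1 b0 b1 b2 b3 L & R2 b0 b1 b2 b3 M].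
Proof.
move=> dL dM LM m.
have [p [pn pL pM]] := pick_cap m.
have [l [lL il]] := extend_line dL pL pn.
have [n [nM inn]] := extend_line dM pM pn.
have [v hv] : exists v, v \notin <<[:: p; l; n]>>%VS.
  by apply: notin_exists; apply: (leq_ltn_trans (dim_span _)).
have eL := line_eq dL pL lL il.
have eM := line_eq dM pM nM inn.
have hi : indep4 p l n v.
  move=> x0 x1 x2 x3; rewrite cmbE => e.
  have mp : p \in <<[:: p; l; n]>>%VS by apply: memv_span; rewrite !inE eqxx.
  have ml : l \in <<[:: p; l; n]>>%VS by apply: memv_span; rewrite !inE eqxx orbT.
  have mn : n \in <<[:: p; l; n]>>%VS by apply: memv_span; rewrite !inE eqxx !orbT.
  have x30 : x3 = 0.
    have [//|x3n] := eqVneq x3 0; exfalso; move/negP: hv; apply.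
    have -> : v = - x3^-1 *: (x0 *: p + x1 *: l + x2 *: n).
      apply: (scalerI x3n); rewrite scalerA mulrN mulfV // scaleN1r.
      by apply/eqP; rewrite -subr_eq0 opprK addrC e.
    by rewrite memvZ // !memvD // memvZ.
  rewrite x30 scale0r addr0 in e.
  have x20 : x2 = 0.
    have [//|x2n] := eqVneq x2 0; exfalso; move/negP: LM; apply.
    have nL : n \in L.
      have -> : n = - x2^-1 *: (x0 *: p + x1 *: l).
        apply: (scalerI x2n); rewrite scalerA mulrN mulfV // scaleN1r.
        by apply/eqP; rewrite -subr_eq0 opprK addrC e.
      by rewrite memvZ // !memvD // memvZ.
    rewrite eq_sym eqEdim dL dM leqnn andbT eM.
    by apply: span2_sub.
  rewrite x20 scale0r addr0 in e.
  by have [-> ->] := il _ _ e.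
have [c0 c1 c2 c3] := cmb1000 p l n v.
exists p, l, n, v; split => //.
- by exists 1, 0; split; [exact: nz10 | rewrite c0 c1].
- by exists 1, 0; split; [exact: nz10 | rewrite c0 c2].
Qed.

Lemma qform_vec4 (F : fieldType) (y0 y1 y2 y3 : F) :
  qform0 (vec4 y0 y1 y2 y3) = y0 * y3 - y1 * y2.
Proof. by rewrite /qform0 /coord4 !mxE !inordK. Qed.

Lemma R_quad (F : fieldType) (b0 b1 b2 b3 : 'rV[F]_4) L x :
  indep4 b0 b1 b2 b3 -> R1 b0 b1 b2 b3 L \/ R2 b0 b1 b2 b3 L -> x \in L ->
  on_quadric (invmx (mx4 b0 b1 b2 b3)) x.
Proof.
move=> /indep4_unit hu [[s [t [_ ->]]] | [u [v [_ ->]]]].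
- move/R1_pt => [a [c ->]].
  by rewrite /on_quadric /cmb mulmxK // qform_vec4; ring.
- move/mem_span2 => [a [c ->]]; rewrite cmb_lin.
  by rewrite /on_quadric /cmb mulmxK // qform_vec4; ring.
Qed.

Lemma R1_ruling (F : fieldType) (b0 b1 b2 b3 : 'rV[F]_4) L :
  R1 b0 b1 b2 b3 L -> ruling1 (invmx (mx4 b0 b1 b2 b3)) L.
Proof. by rewrite /ruling1 invmxK. Qed.
Lemma R2_ruling (F : fieldType) (b0 b1 b2 b3 : 'rV[F]_4) L :
  R2 b0 b1 b2 b3 L -> ruling2 (invmx (mx4 b0 b1 b2 b3)) L.
Proof. by rewrite /ruling2 invmxK. Qed.

Lemma finish (F : fieldType) (A1 A2 : seq {vspace 'rV[F]_4}) (b0 b1 b2 b3 : 'rV[F]_4) :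
  indep4 b0 b1 b2 b3 ->
  ((forall L, L \in A1 -> R1 b0 b1 b2 b3 L) \/ (forall L, L \in A1 -> R2 b0 b1 b2 b3 L)) ->
  ((forall L, L \in A2 -> R1 b0 b1 b2 b3 L) \/ (forall L, L \in A2 -> R2 b0 b1 b2 b3 L)) ->
  exists g : 'M[F]_4, g \in unitmx /\
    (forall L x, L \in A1 ++ A2 -> x \in L -> on_quadric g x) /\
    ((forall L, L \in A1 -> ruling1 g L) \/ (forall L, L \in A1 -> ruling2 g L)) /\
    ((forall L, L \in A2 -> ruling1 g L) \/ (forall L, L \in A2 -> ruling2 g L)).
Proof.
move=> hi h1 h2; exists (invmx (mx4 b0 b1 b2 b3)); split.
  by rewrite unitmx_inv indep4_unit.
split.
  move=> L x; rewrite mem_cat => /orP [] hL; apply: (R_quad hi).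
  - by case: h1 => h; [left|right]; apply: h.
  - by case: h2 => h; [left|right]; apply: h.
split.
- by case: h1 => h; [left|right] => L /h; [apply: R1_ruling | apply: R2_ruling].
- by case: h2 => h; [left|right] => L /h; [apply: R1_ruling | apply: R2_ruling].
Qed.

Lemma ex3 (T : Type) (s : seq T) : (3 <= size s)%N -> exists x y z r, s = [:: x, y, z & r].
Proof. by case: s => [|x [|y [|z r]]] //= _; exists x, y, z, r. Qed.
Unset Implicit Arguments.

Theorem lemma2p3 (F : fieldType) (A1 A2 : seq {vspace 'rV[F]_4}) (a b : nat) :
  (0 < a)%N -> (0 < b)%N ->
  size A1 = a -> size A2 = b ->
  uniq A1 -> uniq A2 ->
  (forall L, L \in A1 ++ A2 -> is_line L) ->
  (forall L, L \in A1 -> L \notin A2) ->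
  (forall L M, L \in A1 -> M \in A2 -> lines_meet L M) ->
  (forall L M, L \in A1 -> M \in A1 -> L != M -> lines_disjoint L M) ->
  (forall L M, L \in A2 -> M \in A2 -> L != M -> lines_disjoint L M) ->
  ((3 <= a <= b)%N \/ (a <= b <= 3)%N) ->
  exists g : 'M[F]_4, g \in unitmx /\
    (forall L x, L \in A1 ++ A2 -> x \in L -> on_quadric g x) /\
    ((forall L, L \in A1 -> ruling1 g L) \/ (forall L, L \in A1 -> ruling2 g L)) /\
    ((forall L, L \in A2 -> ruling1 g L) \/ (forall L, L \in A2 -> ruling2 g L)).
Proof.
move=> ha hb sa sb u1 u2 hline hd hmeet hs1 hs2 hab.
have d1 : forall L, L \in A1 -> \dim L = 2%N.
  by move=> L hL; apply/eqP; apply: hline; rewrite mem_cat hL.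
have d2 : forall L, L \in A2 -> \dim L = 2%N.
  by move=> L hL; apply/eqP; apply: hline; rewrite mem_cat hL orbT.
have mt : forall L M, L \in A1 -> M \in A2 -> (L :&: M)%VS != 0%VS := hmeet.
have mt' : forall L M, L \in A1 -> M \in A2 -> (M :&: L)%VS != 0%VS.
  by move=> L M hL hM; rewrite capvC; apply: mt.
have k1 : forall L M, L \in A1 -> M \in A1 -> L != M -> (L :&: M)%VS = 0%VS.
  by move=> L M hL hM hLM; apply/eqP; apply: hs1.
have k2 : forall L M, L \in A2 -> M \in A2 -> L != M -> (L :&: M)%VS = 0%VS.
  by move=> L M hL hM hLM; apply/eqP; apply: hs2.
have three : forall (A : seq {vspace 'rV[F]_4}), uniq A -> (3 <= size A)%N ->
    exists L1 L2 L3, [/\ L1 \in A, L2 \in A, L3 \in A & [/\ L1 != L2, L1 != L3 & L2 != L3]].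
  move=> A uA /ex3 [x [y [z [r eA]]]]; exists x, y, z.
  move: uA; rewrite eA /= !inE !negb_or => /andP [/andP [nxy /andP [nxz _]] /andP [/andP [nyz _] _]].
  by rewrite !eqxx !orbT.
case: hab => /andP [h3a hab].
-
  have s1 : (3 <= size A1)%N by rewrite sa.
  have s2 : (3 <= size A2)%N by rewrite sb (leq_trans h3a hab).
  have [L1 [L2 [L3 [l1 l2 l3 [n12 n13 n23]]]]] := three A1 u1 s1.
  have [M1 [M2 [M3 [m1 m2 m3 [o12 o13 o23]]]]] := three A2 u2 s2.
  have [b0 [b1 [b2 [b3 [hi r1 r2 r3]]]]] :=
    three_skew (d1 _ l1) (d1 _ l2) (d1 _ l3) (k1 _ _ l1 l2 n12) (k1 _ _ l1 l3 n13) (k1 _ _ l2 l3 n23).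
  have hA2 : forall M, M \in A2 -> R2 b0 b1 b2 b3 M.
    move=> M hM; apply: (K hi r1 r2 r3 (k1 _ _ l1 l2 n12) (k1 _ _ l1 l3 n13) (k1 _ _ l2 l3 n23) (d2 _ hM));
    exact: mt'.
  have hA1 : forall L, L \in A1 -> R1 b0 b1 b2 b3 L.
    move=> L hL; apply/R1_swap.
    apply: (K (indep4_swap hi) (proj1 (R2_swap _ _ _ _ _) (hA2 _ m1))
              (proj1 (R2_swap _ _ _ _ _) (hA2 _ m2)) (proj1 (R2_swap _ _ _ _ _) (hA2 _ m3))
              (k2 _ _ m1 m2 o12) (k2 _ _ m1 m3 o13) (k2 _ _ m2 m3 o23) (d1 _ hL));
    exact: mt.
  by apply: (finish hi); [left|right].
-
  have [eb|bl] := eqVneq b 3%N.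
  + have s2 : (3 <= size A2)%N by rewrite sb eb.
    have [M1 [M2 [M3 [r eA2]]]] := ex3 s2.
    have r0 : size r = 0%N by move: sb; rewrite eA2 eb /= => -[].
    rewrite (size0nil r0) in eA2.
    have m1 : M1 \in A2 by rewrite eA2 !inE eqxx.
    have m2 : M2 \in A2 by rewrite eA2 !inE eqxx !orbT.
    have m3 : M3 \in A2 by rewrite eA2 !inE eqxx !orbT.
    have [o12 o13 o23] : [/\ M1 != M2, M1 != M3 & M2 != M3].
      by move: u2; rewrite eA2 /= !inE !negb_or => /and3P [/andP [-> ->] -> _].
    have [b0 [b1 [b2 [b3 [hi r1 r2 r3]]]]] :=
      three_skew (d2 _ m1) (d2 _ m2) (d2 _ m3) (k2 _ _ m1 m2 o12) (k2 _ _ m1 m3 o13) (k2 _ _ m2 m3 o23).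
    have hA1 : forall L, L \in A1 -> R2 b0 b1 b2 b3 L.
      move=> L hL; apply: (K hi r1 r2 r3 (k2 _ _ m1 m2 o12) (k2 _ _ m1 m3 o13) (k2 _ _ m2 m3 o23) (d1 _ hL));
      exact: mt.
    have hA2 : forall M, M \in A2 -> R1 b0 b1 b2 b3 M.
      move=> M hM.
      move: hM; rewrite eA2; by rewrite !inE => /orP [/eqP ->|/orP [/eqP ->|/eqP ->]].
    by apply: (finish hi); [right|left].
  + have b2 : (b <= 2)%N by rewrite -ltnS ltn_neqAle bl hab.
    have ha1 : (0 < size A1 <= 2)%N by rewrite sa ha (leq_trans h3a b2).
    have hb1 : (0 < size A2 <= 2)%N by rewrite sb hb b2.
    suff : exists b0 b1 b2 b3, [/\ indep4 b0 b1 b2 b3, forall L, L \in A1 -> R1 b0 b1 b2 b3 L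
        & forall L, L \in A2 -> R2 b0 b1 b2 b3 L].
      by move=> [b0 [b1 [b2' [b3 [hi h1 h2]]]]]; apply: (finish hi); [left|right].
    move: ha1 hb1; case eA1: A1 => [|L1 [|L2 [|L3 r1]]] //= _;
      case eA2: A2 => [|M1 [|M2 [|M3 r2]]] //= _.
    * have l1 : L1 \in A1 by rewrite eA1 !inE eqxx.
      have m1 : M1 \in A2 by rewrite eA2 !inE eqxx.
      have n : L1 != M1 by have := hd _ l1; rewrite eA2 inE.
      have [b0 [b1 [b2' [b3 [hi r1 r2]]]]] := S11 (d1 _ l1) (d2 _ m1) n (mt _ _ l1 m1).
      by exists b0, b1, b2', b3; split => // L; rewrite inE => /eqP ->.
    * have l1 : L1 \in A1 by rewrite eA1 !inE eqxx.
      have m1 : M1 \in A2 by rewrite eA2 !inE eqxx.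
      have m2 : M2 \in A2 by rewrite eA2 !inE eqxx orbT.
      have o12 : M1 != M2 by move: u2; rewrite eA2 /= !inE andbT.
      have [b0 [b1 [b2' [b3 [hi r1 r2 r3]]]]] :=
        S12 (d1 _ l1) (d2 _ m1) (d2 _ m2) (k2 _ _ m1 m2 o12) (mt _ _ l1 m1) (mt _ _ l1 m2).
      exists b0, b1, b2', b3; split => // L.
      - by rewrite inE => /eqP ->.
      - by rewrite !inE => /orP [] /eqP ->.
    * exfalso; move: sa sb h3a; rewrite eA1 eA2 /= => <- <-; by [].
    * have l1 : L1 \in A1 by rewrite eA1 !inE eqxx.
      have l2 : L2 \in A1 by rewrite eA1 !inE eqxx orbT.
      have m1 : M1 \in A2 by rewrite eA2 !inE eqxx.
      have m2 : M2 \in A2 by rewrite eA2 !inE eqxx orbT.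
      have n12 : L1 != L2 by move: u1; rewrite eA1 /= !inE andbT.
      have o12 : M1 != M2 by move: u2; rewrite eA2 /= !inE andbT.
      have [b0 [b1 [b2' [b3 [hi r1 r2 r3 r4]]]]] :=
        S22 (d1 _ l1) (d1 _ l2) (d2 _ m1) (d2 _ m2) (k1 _ _ l1 l2 n12) (k2 _ _ m1 m2 o12)
          (mt _ _ l1 m1) (mt _ _ l1 m2) (mt _ _ l2 m1) (mt _ _ l2 m2).
      exists b0, b1, b2', b3; split => // L.
      - by rewrite !inE => /orP [] /eqP ->.
      - by rewrite !inE => /orP [] /eqP ->.
Qed.
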